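(* Let $(\mathfrak{A},\mathfrak{A}_0)$ be a CQ*-algebra as in the context, let $H=H^*\in\mathfrak{A}$ and $\omega\in E(\mathfrak{A}_0)$, and suppose $\overline{\omega}$ is a ground state for $H$ with eigenvalue $\alpha_*$. Then: (1) $-i\,\overline{\omega}(A^*\delta_H(A))\ge0$ for all $A\in\mathfrak{A}_0$; (2) $\overline{\omega}(\delta_H(A))=0$ for all $A\in\mathfrak{A}_0$; (3) $\alpha_*=\min Spec(\pi_{\overline{\omega}}(H))$.
   Context: Let $\mathfrak{A}_0$ be a unital C*-algebra with C*-norm $\|\cdot\|_0$ and unit $I$, and $\|\cdot\|$ another norm on $\mathfrak{A}_0$ with $\|A\|\le\|A\|_0$, $\|AB\|\le\|A\|\,\|B\|_0$, $\|A^*\|=\|A\|$. $\mathfrak{A}$ is the $\|\cdot\|$-completion of $\mathfrak{A}_0$, with $XA:=\lim A_nA$, $AX:=\lim AA_n$, $X^*:=\lim A_n^*$ for $X\in\mathfrak{A}$, $A\in\mathfrak{A}_0$, $A_n\in\mathfrak{A}_0$, $\|A_n-X\|\to0$. $E(\mathfrak{A}_0)$ is the set of positive linear functionals $\omega$ on $\mathfrak{A}_0$ with $\omega(I)=1$ and $|\omega(A)|\le\gamma\|A\|$ for some $\gamma>0$; $\overline{\omega}$ is its continuous extension to $\mathfrak{A}$. $(\pi_\omega,\lambda_\omega,\mathcal{H}_\omega)$ is the GNS construction of $\omega$ on $\mathfrak{A}_0$ ($\lambda_\omega:\mathfrak{A}_0\to\mathcal{H}_\omega$ linear with dense range, $(\lambda_\omega(A)|\lambda_\omega(B))=\omega(B^*A)$).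 For $X\in\mathfrak{A}$ and $B\in\mathfrak{A}_0$, $\pi_{\overline{\omega}}(X)\lambda_\omega(B)$ is the conjugate-linear functional on $\lambda_\omega(\mathfrak{A}_0)$ given by $\langle\pi_{\overline{\omega}}(X)\lambda_\omega(B),\lambda_\omega(C)\rangle=\overline{\omega}(C^*XB)$, $C\in\mathfrak{A}_0$. Such a functional $v$ is bounded if it extends continuously to $\mathcal{H}_\omega$, and then $[v]\in\mathcal{H}_\omega$ is the vector with $\langle v,\eta\rangle=([v]|\eta)$. For $A\in\mathfrak{A}_0$, $\delta_H(A):=i(HA-AH)\in\mathfrak{A}$. $\overline{\omega}$ is a ground state for $H$ (with eigenvalue $\alpha_*$) if (a) $\overline{\omega}(AH)=\alpha_*\overline{\omega}(A)$ for all $A\in\mathfrak{A}_0$, and (b) $\langle\pi_{\overline{\omega}}(H)\lambda_\omega(B),\lambda_\omega(B)\rangle\ge\alpha_*(\lambda_\omega(B)|\lambda_\omega(B))$ for all $B\in\mathfrak{A}_0$. $Spec(\pi_{\overline{\omega}}(H))$ is the set of $\alpha\in\mathbb{C}$ for which there is $B\in\mathfrak{A}_0$ with $\lambda_\omega(B)\ne0$, $\pi_{\overline{\omega}}(H)\lambda_\omega(B)$ bounded and $[\pi_{\overline{\omega}}(H)\lambda_\omega(B)]=\alpha\lambda_\omega(B)$. *)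

(* Defs.v *)
From HB Require Import structures.
From mathcomp Require Import all_boot all_order all_algebra.
From mathcomp Require Import complex reals.
Set Implicit Arguments. Unset Strict Implicit. Unset Printing Implicit Defensive.
Import Order.TTheory GRing.Theory Num.Theory.
Local Open Scope ring_scope.

Definition cabs {R : realType} (c : R[i]) : R := ComplexField.Normc.normc c.

Definition tends0 {R : realType} (s : nat -> R) : Prop :=
  forall e : R, 0 < e -> exists N : nat, forall k, (N <= k)%N -> `|s k| < e.

Definition is_norm {R : realType} (V : lmodType R[i]) (nV : V -> R) : Prop :=
  (forall x, 0 <= nV x) /\
  (forall x, nV x = 0 -> x = 0) /\
  (forall x y, nV (x + y) <= nV x + nV y) /\
  (forall (c : R[i]) x, nV (c *: x) = cabs c * nV x).

Definition complete_wrt {R : realType} (V : zmodType) (nV : V -> R) : Prop :=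
  forall u : nat -> V,
    (forall e : R, 0 < e -> exists N : nat, forall m k, (N <= m)%N -> (N <= k)%N ->
        nV (u m - u k) < e) ->
    exists l : V, tends0 (fun k => nV (u k - l)).

Definition unital_Cstar {R : realType} (A0 : algType R[i]) (star : A0 -> A0)
  (n0 : A0 -> R) : Prop :=
  (forall a, star (star a) = a) /\
  (forall a b, star (a + b) = star a + star b) /\
  (forall (c : R[i]) a, star (c *: a) = conjc c *: star a) /\
  (forall a b, star (a * b) = star b * star a) /\
  is_norm n0 /\
  complete_wrt n0 /\
  (forall a b, n0 (a * b) <= n0 a * n0 b) /\
  (forall a, n0 (star a * a) = n0 a ^+ 2).

Definition CQ_norm {R : realType} (A0 : algType R[i]) (star : A0 -> A0)
  (n0 n : A0 -> R) : Prop :=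
  is_norm n /\
  (forall a, n a <= n0 a) /\
  (forall a b, n (a * b) <= n a * n0 b) /\
  (forall a, n (star a) = n a).

Definition is_completion {R : realType} (A0 : algType R[i]) (n : A0 -> R)
  (X : lmodType R[i]) (nX : X -> R) (j : A0 -> X) : Prop :=
  is_norm nX /\
  complete_wrt nX /\
  (forall (c : R[i]) a b, j (c *: a + b) = c *: j a + j b) /\
  (forall a, nX (j a) = n a) /\
  (forall x : X, exists u : nat -> A0, tends0 (fun k => nX (j (u k) - x))).

(* X A := lim A_n A,  A X := lim A A_n,  X^* := lim A_n^*  whenever A_n -> X *)
Definition completion_ops {R : realType} (A0 : algType R[i]) (star : A0 -> A0)
  (X : lmodType R[i]) (nX : X -> R) (j : A0 -> X)
  (mulXA : X -> A0 -> X) (mulAX : A0 -> X -> X) (starX : X -> X) : Prop :=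
  forall (x : X) (u : nat -> A0), tends0 (fun k => nX (j (u k) - x)) ->
    (forall a, tends0 (fun k => nX (j (u k * a) - mulXA x a))) /\
    (forall a, tends0 (fun k => nX (j (a * u k) - mulAX a x))) /\
    tends0 (fun k => nX (j (star (u k)) - starX x)).

Definition CQstar_algebra {R : realType} (A0 : algType R[i]) (star : A0 -> A0)
  (n0 n : A0 -> R) (X : lmodType R[i]) (nX : X -> R) (j : A0 -> X)
  (mulXA : X -> A0 -> X) (mulAX : A0 -> X -> X) (starX : X -> X) : Prop :=
  unital_Cstar star n0 /\ CQ_norm star n0 n /\ is_completion n nX j /\
  completion_ops star nX j mulXA mulAX starX.

Definition in_E {R : realType} (A0 : algType R[i]) (star : A0 -> A0) (n : A0 -> R)
  (omega : A0 -> R[i]) : Prop :=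
  (forall (c : R[i]) a b, omega (c *: a + b) = c * omega a + omega b) /\
  (forall a, 0 <= omega (star a * a)) /\
  omega 1 = 1 /\
  exists gamma : R, 0 < gamma /\ forall a, cabs (omega a) <= gamma * n a.

Definition cont_extension {R : realType} (A0 : algType R[i]) (X : lmodType R[i])
  (nX : X -> R) (j : A0 -> X) (omega : A0 -> R[i]) (omegab : X -> R[i]) : Prop :=
  forall (x : X) (u : nat -> A0), tends0 (fun k => nX (j (u k) - x)) ->
    tends0 (fun k => cabs (omega (u k) - omegab x)).

Definition hnorm {R : realType} (Hw : lmodType R[i]) (ip : Hw -> Hw -> R[i])
  (xi : Hw) : R := Num.sqrt (complex.Re (ip xi xi)).

(* (lambda_omega, H_omega) of the GNS construction of omega: H_omega = (Hw, ip) is a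
   Hilbert space (ip linear in the first, conjugate linear in the second variable),
   lam : A0 -> Hw linear with dense range, (lam a | lam b) = omega (b^* a). *)
Definition is_GNS {R : realType} (A0 : algType R[i]) (star : A0 -> A0)
  (omega : A0 -> R[i]) (Hw : lmodType R[i]) (ip : Hw -> Hw -> R[i])
  (lam : A0 -> Hw) : Prop :=
  (forall (c : R[i]) x y z, ip (c *: x + y) z = c * ip x z + ip y z) /\
  (forall x y, ip y x = conjc (ip x y)) /\
  (forall x, 0 <= ip x x) /\
  (forall x, ip x x = 0 -> x = 0) /\
  complete_wrt (hnorm ip) /\
  (forall (c : R[i]) a b, lam (c *: a + b) = c *: lam a + lam b) /\
  (forall a b, ip (lam a) (lam b) = omega (star b * a)) /\
  (forall xi : Hw, exists u : nat -> A0, tends0 (fun k => hnorm ip (lam (u k) - xi))).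

(* <pi_omegab(X) lam(B), lam(C)> = omegab(C^* X B) *)
Definition pi_fun {R : realType} (A0 : algType R[i]) (star : A0 -> A0)
  (X : lmodType R[i]) (mulXA : X -> A0 -> X) (mulAX : A0 -> X -> X)
  (omegab : X -> R[i]) (x : X) (b : A0) : A0 -> R[i] :=
  fun c => omegab (mulXA (mulAX (star c) x) b).

(* The conjugate-linear functional v on lam(A0) (lam c |-> v c) is bounded, i.e. it
   extends to a continuous f on Hw, and [v] = eta, i.e. <v, xi> = (eta | xi) for all
   xi in Hw (where <v, .> denotes the continuous extension f). *)
Definition bounded_with_vector {R : realType} (A0 : algType R[i])
  (Hw : lmodType R[i]) (ip : Hw -> Hw -> R[i]) (lam : A0 -> Hw)
  (v : A0 -> R[i]) (eta : Hw) : Prop :=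
  exists f : Hw -> R[i],
    (forall c, f (lam c) = v c) /\
    (forall xi (e : R), 0 < e -> exists d : R, 0 < d /\
        forall zeta, hnorm ip (zeta - xi) < d -> cabs (f zeta - f xi) < e) /\
    (forall xi, f xi = ip eta xi).

Definition Spec {R : realType} (A0 : algType R[i]) (star : A0 -> A0)
  (X : lmodType R[i]) (mulXA : X -> A0 -> X) (mulAX : A0 -> X -> X)
  (omegab : X -> R[i]) (Hw : lmodType R[i]) (ip : Hw -> Hw -> R[i])
  (lam : A0 -> Hw) (h : X) (alpha : R[i]) : Prop :=
  exists b : A0, lam b <> 0 /\
    bounded_with_vector ip lam (pi_fun star mulXA mulAX omegab h b) (alpha *: lam b).

Definition ground_state {R : realType} (A0 : algType R[i]) (star : A0 -> A0)
  (X : lmodType R[i]) (j : A0 -> X) (mulXA : X -> A0 -> X) (mulAX : A0 -> X -> X)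
  (omegab : X -> R[i]) (Hw : lmodType R[i]) (ip : Hw -> Hw -> R[i])
  (lam : A0 -> Hw) (h : X) (alpha : R[i]) : Prop :=
  (forall a, omegab (mulAX a h) = alpha * omegab (j a)) /\
  (forall b, alpha * ip (lam b) (lam b) <= pi_fun star mulXA mulAX omegab h b b).

Definition deltaH {R : realType} (A0 : algType R[i]) (X : lmodType R[i])
  (mulXA : X -> A0 -> X) (mulAX : A0 -> X -> X) (h : X) (a : A0) : X :=
  'i%C *: (mulXA h a - mulAX a h).

(* Main.v *)
Require Import Defs.
From HB Require Import structures.
From mathcomp Require Import all_boot all_order all_algebra.
From mathcomp Require Import complex reals ring lra.
Import Order.TTheory GRing.Theory Num.Theory.
Set Implicit Arguments. Unset Strict Implicit.
Local Open Scope ring_scope.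

Section T0.
Variable R : realType.

Lemma t0_ext (s t : nat -> R) : (forall k, s k = t k) -> tends0 s -> tends0 t.
Proof. move=> E h e he; have [N HN] := h e he; exists N => k hk; rewrite -E; exact: HN. Qed.

Lemma t0_add (s t : nat -> R) : tends0 s -> tends0 t -> tends0 (fun k => s k + t k).
Proof.
move=> hs ht e he.
have he2 : 0 < e / 2 by rewrite divr_gt0.
have [N1 H1] := hs _ he2; have [N2 H2] := ht _ he2.
exists (maxn N1 N2) => k hk.
have h1 := H1 k (leq_trans (leq_maxl _ _) hk).
have h2 := H2 k (leq_trans (leq_maxr _ _) hk).
apply: (le_lt_trans (ler_normD _ _)).
have -> : e = e / 2 + e / 2 by rewrite -splitr.
exact: ltrD.
Qed.

Lemma t0_scale (c : R) (s : nat -> R) : tends0 s -> tends0 (fun k => c * s k).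
Proof.
move=> hs e he.
have hc : 0 < `|c| + 1 by rewrite ltr_wpDl.
have he' : 0 < e / (`|c| + 1) by rewrite divr_gt0.
have [N HN] := hs _ he'; exists N => k hk.
rewrite normrM.
apply: (le_lt_trans (ler_wpM2l (normr_ge0 c) (ltW (HN k hk)))).
rewrite mulrA ltr_pdivrMr // mulrC ltr_pM2l //.
by rewrite ltrDl.
Qed.

Lemma t0_le (s r : nat -> R) : tends0 s -> (forall k, `|r k| <= s k) -> tends0 r.
Proof.
move=> hs hl e he; have [N HN] := hs e he; exists N => k hk.
apply: (le_lt_trans (hl k)); apply: (le_lt_trans (ler_norm _)); exact: HN.
Qed.

Lemma t0_const (c : R) : tends0 (fun _ => c) -> c = 0.
Proof.
move=> h; apply/eqP; apply/negPn/negP => hc.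
have hp : 0 < `|c| by rewrite normr_gt0.
have [N HN] := h _ hp. have := HN N (leqnn N). by rewrite ltxx.
Qed.
End T0.

Section Norm.
Variable R : realType.
Variable V : lmodType R[i].
Variable nV : V -> R.
Hypothesis hn : is_norm nV.

Lemma cabsN1 : cabs (-1 : R[i]) = 1.
Proof. by rewrite /cabs (@normcN R) ComplexField.Normc.normc1. Qed.
Lemma cabs0 : cabs (0 : R[i]) = 0.
Proof. by rewrite /cabs ComplexField.Normc.normc0. Qed.

Lemma nV0 : nV 0 = 0.
Proof. case: hn => _ [_ [_ hs]]. by rewrite -(scale0r (0:V)) hs cabs0 mul0r. Qed.

Lemma nVN x : nV (- x) = nV x.
Proof. case: hn => _ [_ [_ hs]]. by rewrite -scaleN1r hs cabsN1 mul1r. Qed.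

Lemma nV_uniq (u : nat -> V) x y :
  tends0 (fun k => nV (u k - x)) -> tends0 (fun k => nV (u k - y)) -> x = y.
Proof.
case: hn => h0 [hz [ht hs]] hx hy.
apply/eqP; rewrite -subr_eq0; apply/eqP; apply: hz.
apply: t0_const.
apply: (t0_le (t0_add hx hy)) => k.
rewrite ger0_norm // -(nVN (u k - x)).
have -> : x - y = (- (u k - x)) + (u k - y) by rewrite opprB addrA subrK.
exact: ht.
Qed.

Lemma nV_combo (p q : nat -> V) x y (c : R[i]) :
  tends0 (fun k => nV (p k - x)) -> tends0 (fun k => nV (q k - y)) ->
  tends0 (fun k => nV ((c *: p k + q k) - (c *: x + y))).
Proof.
case: hn => h0 [hz [ht hs]] hx hy.
apply: (t0_le (t0_add (t0_scale (cabs c) hx) hy)) => k.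
rewrite ger0_norm //.
have -> : (c *: p k + q k) - (c *: x + y) = c *: (p k - x) + (q k - y).
  by rewrite scalerBr opprD addrACA.
by rewrite -hs; exact: ht.
Qed.
End Norm.

Section Lin.
Variable R : realType.
Variables V W : lmodType R[i].
Variable f : V -> W.
Hypothesis hf : forall (c : R[i]) x y, f (c *: x + y) = c *: f x + f y.
Lemma lin0 : f 0 = 0.
Proof. have h := hf 1 0 0; rewrite scaler0 addr0 scale1r in h. by apply: (addrI (f 0)); rewrite -h addr0. Qed.
Lemma linZ c x : f (c *: x) = c *: f x.
Proof. by rewrite -[c *: x]addr0 hf lin0 addr0. Qed.
Lemma linD x y : f (x + y) = f x + f y.
Proof. by have := hf 1 x y; rewrite !scale1r. Qed.
Lemma linN x : f (- x) = - f x.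
Proof. by rewrite -scaleN1r linZ scaleN1r. Qed.
Lemma linB x y : f (x - y) = f x - f y.
Proof. by rewrite linD linN. Qed.
End Lin.

Lemma cabs_norm (R : realType) : is_norm (@cabs R : R[i] -> R).
Proof.
split; first by move=> [a b]; rewrite /cabs /= sqrtr_ge0.
split; first exact: ComplexField.Normc.eq0_normc.
split; first exact: le_normcD.
move=> c x; exact: ComplexField.Normc.normcM.
Qed.
Section IP.
Variable R : realType.
Variable Hw : lmodType R[i].
Variable ip : Hw -> Hw -> R[i].
Hypothesis hl : forall (c : R[i]) x y z, ip (c *: x + y) z = c * ip x z + ip y z.
Hypothesis hsym : forall x y, ip y x = conjc (ip x y).
Hypothesis hpos : forall x, 0 <= ip x x.
Hypothesis hdef : forall x, ip x x = 0 -> x = 0.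

Lemma ipL z : forall (c : R[i]) x y, (fun x => ip x z) (c *: x + y) = c *: (fun x => ip x z) x + (fun x => ip x z) y.
Proof. move=> c x y /=; exact: hl. Qed.

Lemma ipZl c x z : ip (c *: x) z = c * ip x z.
Proof. exact: (linZ (ipL z)). Qed.
Lemma ipDl x y z : ip (x + y) z = ip x z + ip y z.
Proof. exact: (linD (ipL z)). Qed.
Lemma ipBl x y z : ip (x - y) z = ip x z - ip y z.
Proof. exact: (linB (ipL z)). Qed.
Lemma ip0l z : ip 0 z = 0.
Proof. exact: (lin0 (ipL z)). Qed.
Lemma ipZr c x z : ip z (c *: x) = conjc c * ip z x.
Proof. by rewrite hsym ipZl rmorphM /= -hsym. Qed.
Lemma ipDr x y z : ip z (x + y) = ip z x + ip z y.
Proof. by rewrite hsym ipDl rmorphD /= -!hsym. Qed.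
Lemma ipBr x y z : ip z (x - y) = ip z x - ip z y.
Proof. by rewrite hsym ipBl rmorphB /= -!hsym. Qed.
Lemma ip0r z : ip z 0 = 0.
Proof. by rewrite hsym ip0l rmorph0. Qed.

Lemma ip_CS x y : cabs (ip x y) <= hnorm ip x * hnorm ip y.
Proof.
have [M0|M0] := eqVneq (ip y y) 0.
  rewrite (hdef M0) ip0r cabs0; exact: mulr_ge0 (sqrtr_ge0 _) (sqrtr_ge0 _).
set p := ip x y.
have hM : conjc (ip y y) = ip y y by rewrite -hsym.
set c := (ip y y)^-1 * p.
have h := hpos (x - c *: y).
have E : ip (x - c *: y) (x - c *: y) = ip x x - (p * conjc p) / ip y y.
  rewrite !ipBl !ipBr !ipZl !ipZr -/p [ip y x]hsym -/p /c rmorphM /= conjc_inv hM.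
  by field.
rewrite E in h.
have h2 : 0 <= (ip x x - p * conjc p / ip y y) * ip y y by apply: mulr_ge0.
rewrite mulrBl mulfVK // subr_ge0 in h2.
have Nr := ger0_Im (hpos x); have Mr := ger0_Im (hpos y).
have Np : 0 <= complex.Re (ip x x) by move: (hpos x); rewrite lecE => /andP[].
rewrite /hnorm -sqrtrM //.
clear E h c; clearbody p.
move: h2 Nr Mr Np; rewrite /cabs lecE.
case: (ip x x) => n1 n2; case: (ip y y) => m1 m2; case: p => a b /= /andP[_ H] Nr Mr Np.
apply: ler_wsqrtr. rewrite Nr Mr in H. move: H; rewrite /=. nra.
Qed.

Lemma ip_cont eta xi (e : R) : 0 < e -> exists d : R, 0 < d /\
  forall zeta, hnorm ip (zeta - xi) < d -> cabs (ip eta zeta - ip eta xi) < e.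
Proof.
move=> he.
have hc : 0 < hnorm ip eta + 1 by rewrite ltr_wpDl // sqrtr_ge0.
exists (e / (hnorm ip eta + 1)); split; first by rewrite divr_gt0.
move=> zeta hz; rewrite -ipBr.
apply: (le_lt_trans (ip_CS _ _)).
apply: (le_lt_trans (ler_wpM2l (sqrtr_ge0 _) (ltW hz))).
rewrite mulrA ltr_pdivrMr // mulrC ltr_pM2l //; last by rewrite ltrDl.
Qed.
End IP.

Theorem theorem5p8 (R : realType) (A0 : algType R[i]) (star : A0 -> A0)
  (n0 n : A0 -> R) (X : lmodType R[i]) (nX : X -> R) (j : A0 -> X)
  (mulXA : X -> A0 -> X) (mulAX : A0 -> X -> X) (starX : X -> X)
  (H : X) (omega : A0 -> R[i]) (omegab : X -> R[i])
  (Hw : lmodType R[i]) (ip : Hw -> Hw -> R[i]) (lam : A0 -> Hw)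
  (alpha_star : R[i]) :
  CQstar_algebra star n0 n nX j mulXA mulAX starX ->
  starX H = H ->
  in_E star n omega ->
  cont_extension nX j omega omegab ->
  is_GNS star omega ip lam ->
  ground_state star j mulXA mulAX omegab ip lam H alpha_star ->
  [/\ (forall a : A0,
         0 <= - 'i%C * omegab (mulAX (star a) (deltaH mulXA mulAX H a))),
      (forall a : A0, omegab (deltaH mulXA mulAX H a) = 0) &
      (Spec star mulXA mulAX omegab ip lam H alpha_star /\
       forall alpha, Spec star mulXA mulAX omegab ip lam H alpha -> alpha_star <= alpha)].
Proof.
move=> [[sK [sD [sZ [sM _]]]] [_ [[hnX [_ [jlin [_ seqX]]]] hops]]] hH
  [olin [opos [o1 _]]] hcont [ipl [ipsym [ippos [ipdef [_ [laml [lamip _]]]]]]] [gsa gsb].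
have hnC := cabs_norm R.
pose tX (u : nat -> A0) (x : X) := tends0 (fun k => nX (j (u k) - x)).
have LX : forall u x y, tX u x -> tX u y -> x = y.
  by move=> u x y; apply: (nV_uniq hnX).
have opXA : forall x u, tX u x -> forall a, tX (fun k => u k * a) (mulXA x a).
  by move=> x u hu; case: (hops x u hu).
have opAX : forall x u, tX u x -> forall a, tX (fun k => a * u k) (mulAX a x).
  by move=> x u hu; case: (hops x u hu) => _ [].
have opS : forall x u, tX u x -> tX (fun k => star (u k)) (starX x).
  by move=> x u hu; case: (hops x u hu) => _ [].
have comb : forall c x y u v, tX u x -> tX v y -> tX (fun k => c *: u k + v k) (c *: x + y).
  move=> c x y u v hu hv; apply: t0_ext (nV_combo hnX c hu hv) => k.
  by rewrite jlin.
have F1 : forall a, omegab (j a) = omega a.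
  move=> a.
  have t : tX (fun _ => a) (j a).
    by move=> e he; exists 0%N => k _; rewrite subrr (nV0 hnX) normr0.
  have := t0_const (hcont _ _ t).
  by move/ComplexField.Normc.eq0_normc/eqP; rewrite subr_eq0 => /eqP.
have F2 : forall c x y, omegab (c *: x + y) = c *: omegab x + omegab y.
  move=> c x y; have [u hu] := seqX x; have [v hv] := seqX y.
  apply: (nV_uniq hnC (hcont _ _ (comb c x y u v hu hv))).
  apply: t0_ext (nV_combo hnC c (hcont _ _ hu) (hcont _ _ hv)) => k.
  by rewrite olin.
have F3 : forall a c x y, mulAX a (c *: x + y) = c *: mulAX a x + mulAX a y.
  move=> a c x y; have [u hu] := seqX x; have [v hv] := seqX y.
  apply: (LX _ _ _ (opAX _ _ (comb c x y u v hu hv) a)).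
  apply: t0_ext (nV_combo hnX c (opAX _ _ hu a) (opAX _ _ hv a)) => k.
  by rewrite mulrDr -scalerAr jlin.
have F4 : forall a x b, mulAX a (mulXA x b) = mulXA (mulAX a x) b.
  move=> a x b; have [u hu] := seqX x.
  apply: (LX _ _ _ (opAX _ _ (opXA _ _ hu b) a)).
  apply: t0_ext (opXA _ _ (opAX _ _ hu a) b) => k.
  by rewrite mulrA.
have F5 : forall a b x, mulAX a (mulAX b x) = mulAX (a * b) x.
  move=> a b x; have [u hu] := seqX x.
  apply: (LX _ _ _ (opAX _ _ (opAX _ _ hu b) a)).
  apply: t0_ext (opAX _ _ hu (a * b)) => k.
  by rewrite mulrA.
have F6 : forall x, mulAX 1 x = x.
  move=> x; have [u hu] := seqX x.
  apply: (LX _ _ _ (opAX _ _ hu 1)).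
  apply: t0_ext hu => k. by rewrite mul1r.
have F7 : forall x, mulXA x 1 = x.
  move=> x; have [u hu] := seqX x.
  apply: (LX _ _ _ (opXA _ _ hu 1)).
  apply: t0_ext hu => k. by rewrite mulr1.
have F8 : forall x a, starX (mulXA x a) = mulAX (star a) (starX x).
  move=> x a; have [u hu] := seqX x.
  apply: (LX _ _ _ (opS _ _ (opXA _ _ hu a))).
  apply: t0_ext (opAX _ _ (opS _ _ hu) (star a)) => k.
  by rewrite sM.
have star1 : star 1 = 1.
  have e1 := sM (star 1) 1. by rewrite mulr1 sK mulr1 in e1.
have oL : forall (c : R[i]) x y, omega (c *: x + y) = c *: omega x + omega y by exact: olin.
have F10 : forall a, omega (star a) = conjc (omega a).
  move=> a.
  have h1 := ger0_Im (opos (a + 1)). have h2 := ger0_Im (opos (a + 'i%C *: 1)).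
  have h0 := ger0_Im (opos a).
  rewrite sD star1 mulrDl !mulrDr mul1r !mulr1 !(linD oL) o1 in h1.
  rewrite sD sZ star1 mulrDl !mulrDr -!scalerAr -!scalerAl !mulr1 mul1r scalerA !(linD oL) !(linZ oL) o1 in h2.
  move: h0 h1 h2.
  case: (omega (star a * a)) => p1 p2; case: (omega (star a)) => s1 s2; case: (omega a) => t1 t2.
  rewrite /GRing.scale /= => e0 e1 e2; congr Complex; lra.
have cabsJ : forall z : R[i], cabs (conjc z) = cabs z.
  by case=> p q; rewrite /cabs /= sqrrN.
have F9 : forall x, omegab (starX x) = conjc (omegab x).
  move=> x; have [u hu] := seqX x.
  apply: (nV_uniq hnC (hcont _ _ (opS _ _ hu))).
  apply: t0_ext (hcont _ _ hu) => k.
  by rewrite F10 -rmorphB cabsJ.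
have aH : alpha_star = omegab H.
  by have := gsa 1; rewrite F6 F1 o1 mulr1.
have areal : conjc alpha_star = alpha_star by rewrite aH -F9 hH.
have iiz : forall z : R[i], -'i%C * ('i%C *: z) = z.
  move=> z; change ('i%C *: z) with ('i%C * z).
  by rewrite mulrA mulNr -expr2 sqr_i opprK mul1r.
split.
- move=> a.
  rewrite /deltaH (linZ (F3 (star a))) (linB (F3 (star a))) (linZ F2) (linB F2) F4 F5 gsa F1 -lamip.
  rewrite iiz subr_ge0.
  have := gsb a; by rewrite /pi_fun.
- move=> a.
  rewrite /deltaH (linZ F2) (linB F2) gsa F1.
  have -> : omegab (mulXA H a) = conjc (conjc (omegab (mulXA H a))) by case: (omegab (mulXA H a)) => p q; rewrite /conjc opprK.
  have cJJ : forall z : R[i], conjc (conjc z) = z by case=> p q; rewrite /conjc opprK.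
  by rewrite -F9 F8 hH gsa F1 F10 rmorphM /= cJJ areal subrr scaler0.
split.
- exists 1; split.
    move=> h; have := lamip 1 1; rewrite h (ip0l ipl) star1 mulr1 o1 => /eqP.
    by rewrite eq_sym oner_eq0.
  exists (fun xi => ip (alpha_star *: lam 1) xi); split; [|split].
  + move=> c /=. by rewrite /pi_fun F7 gsa F1 (ipZl ipl) lamip mulr1.
  + move=> xi e he; exact: (ip_cont ipl ipsym ippos ipdef).
  + by [].
- move=> alpha [b [hb [f [hf1 [_ hf3]]]]].
  have e := hf1 b. rewrite hf3 (ipZl ipl) in e.
  have g := gsb b. rewrite -e -subr_ge0 -mulrBl in g.
  have q0 : ip (lam b) (lam b) != 0 by apply/eqP => /ipdef.
  rewrite -subr_ge0.
  have -> : alpha - alpha_star = (alpha - alpha_star) * ip (lam b) (lam b) / ip (lam b) (lam b) by rewrite mulfK.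
  by apply: divr_ge0 => //; exact: ippos.
Qed.
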